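(* Let $\Gamma$ be a finitely generated group which is quasi-isometric to the hyperbolic plane $\mathcal H=\{z\in\mathbb C:\operatorname{Im}z>0\}$ with its hyperbolic metric. Then $\Gamma$ is extraterrestrial.
   Context: $\Gamma$ carries the word metric of a finite generating set. A finitely generated group is extraterrestrial if its Cayley graph with respect to some (equivalently any) finite symmetric generating set is extraterrestrial, where a graph $G=(V,E)$ is extraterrestrial if for every $m$ there is $k$ such that for every $r$ there is a triple $(U,F,O)$ of pairwise disjoint finite vertex sets with $U\neq\emptyset$, $|U|\ge m|F|$, a bijection $\mu:U\to O$ with $d_G(u,\mu(u))\le k$, and every path from $U$ to $O$ either contains a vertex of $F$ or has length at least $r$. *)

(* Defs.v *)
From Stdlib Require Import Reals Lra List.
Import ListNotations.
Open Scope R_scope.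

Set Implicit Arguments.

Record group_str (G : Type) := GroupStr {
  gmul : G -> G -> G;
  ginv : G -> G;
  gone : G;
  gmul_assoc : forall x y z, gmul x (gmul y z) = gmul (gmul x y) z;
  gmul_1l : forall x, gmul gone x = x;
  gmul_Vl : forall x, gmul (ginv x) x = gone
}.

Fixpoint gprod (G : Type) (g : group_str G) (w : list G) : G :=
  match w with
  | nil => gone g
  | s :: w' => gmul g s (gprod g w')
  end.

(** S is a finite symmetric generating set (finite: it is a list) *)
Definition finite_sym_gen_set (G : Type) (g : group_str G) (S : list G) : Prop :=
  (forall s, In s S -> In (ginv g s) S) /\
  (forall x : G, exists w : list G, (forall s, In s w -> In s S) /\ x = gprod g w).

(** [chain adj x l]: x, l_1, l_2, ... is a walk (consecutive vertices adjacent);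
    the walk has vertices x :: l, ends at [last l x], and has length [length l]. *)
Fixpoint chain (V : Type) (adj : V -> V -> Prop) (x : V) (l : list V) : Prop :=
  match l with
  | nil => True
  | y :: l' => adj x y /\ chain adj y l'
  end.

Definition gdist_le (V : Type) (adj : V -> V -> Prop) (u v : V) (k : nat) : Prop :=
  exists l : list V, chain adj u l /\ last l u = v /\ (length l <= k)%nat.

(** A graph is extraterrestrial. Finite vertex sets are duplicate-free lists;
    |X| = length X. *)
Definition extraterrestrial (V : Type) (adj : V -> V -> Prop) : Prop :=
  forall m : nat, exists k : nat, forall r : nat,
    exists (U F O : list V) (mu : V -> V),
      NoDup U /\ NoDup F /\ NoDup O /\
      (forall x, In x U -> ~ In x F) /\
      (forall x, In x U -> ~ In x O) /\
      (forall x, In x F -> ~ In x O) /\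
      U <> nil /\
      (length U >= m * length F)%nat /\
      (forall u, In u U -> In (mu u) O) /\
      (forall u1 u2, In u1 U -> In u2 U -> mu u1 = mu u2 -> u1 = u2) /\
      (forall o, In o O -> exists u, In u U /\ mu u = o) /\
      (forall u, In u U -> gdist_le adj u (mu u) k) /\
      (forall (u : V) (l : list V),
          In u U -> chain adj u l -> In (last l u) O ->
          (exists x, In x (u :: l) /\ In x F) \/ (length l >= r)%nat).

Definition cayley_adj (G : Type) (g : group_str G) (S : list G) (x y : G) : Prop :=
  exists s, In s S /\ y = gmul g x s.

Definition group_extraterrestrial (G : Type) (g : group_str G) : Prop :=
  exists S : list G, finite_sym_gen_set g S /\ extraterrestrial (cayley_adj g S).

Definition word_dist (G : Type) (g : group_str G) (S : list G) (x y : G) (n : nat) : Prop :=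
  gdist_le (cayley_adj g S) x y n /\
  (forall m, gdist_le (cayley_adj g S) x y m -> (n <= m)%nat).

(** * The hyperbolic plane H = {(a,b) : b > 0} (z = a + i b) *)
Definition in_H (p : R * R) : Prop := 0 < snd p.

Definition arcosh (t : R) : R := ln (t + sqrt (t ^ 2 - 1)).

Definition hyp_dist (p q : R * R) : R :=
  arcosh (1 + ((fst p - fst q) ^ 2 + (snd p - snd q) ^ 2) / (2 * snd p * snd q)).

Definition qi_to_H (G : Type) (g : group_str G) (S : list G) (f : G -> R * R) : Prop :=
  (forall x, in_H (f x)) /\
  exists lam C : R, 1 <= lam /\ 0 <= C /\
    (forall x y n, word_dist g S x y n ->
        / lam * INR n - C <= hyp_dist (f x) (f y) /\
        hyp_dist (f x) (f y) <= lam * INR n + C) /\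
    (forall z, in_H z -> exists x, hyp_dist (f x) z <= C).

(* Main.v *)
Require Import Defs.
From Stdlib Require Import Reals List Lra Lia ZArith Classical ClassicalEpsilon.
Import ListNotations.
Open Scope R_scope.


Lemma last_cons_eq {A} (a : A) l d : last (a :: l) d = last l a.
Proof. revert a d; induction l as [|b l IH]; intros a d; [reflexivity|].
  change (last (b :: l) d = last (b :: l) a). rewrite (IH b d), (IH b a). reflexivity. Qed.

Lemma mul_inv_r {G} (g : group_str G) x : gmul g x (ginv g x) = gone g.
Proof.
  rewrite <- (gmul_1l g (gmul g x (ginv g x))).
  rewrite <- (gmul_Vl g (ginv g x)) at 1.
  rewrite <- gmul_assoc. rewrite (gmul_assoc g (ginv g x) x (ginv g x)).
  rewrite gmul_Vl, gmul_1l. apply gmul_Vl.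
Qed.

Fixpoint walk {G} (g : group_str G) (x : G) (w : list G) : list G :=
  match w with nil => nil | s :: w' => gmul g x s :: walk g (gmul g x s) w' end.

Lemma walk_ok {G} (g : group_str G) S x w : (forall s, In s w -> In s S) ->
  chain (cayley_adj g S) x (walk g x w) /\ last (walk g x w) x = gmul g x (gprod g w)
  /\ length (walk g x w) = length w.
Proof.
  revert x; induction w as [|s w IH]; intros x Hw.
  - simpl. split; [exact I|]. split; [|reflexivity]. symmetry.
    rewrite <- (gmul_Vl g x), gmul_assoc, mul_inv_r, gmul_1l. reflexivity.
  - destruct (IH (gmul g x s)) as [H1 [H2 H3]]. { intros; apply Hw; simpl; auto. }
    change (walk g x (s :: w)) with (gmul g x s :: walk g (gmul g x s) w).
    split; [split; [exists s; split; [apply Hw; simpl; auto|reflexivity]|exact H1]|].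
    split; [|simpl; rewrite H3; reflexivity].
    change (last (gmul g x s :: walk g (gmul g x s) w) x = gmul g x (gmul g s (gprod g w))).
    rewrite last_cons_eq, H2, gmul_assoc. reflexivity.
Qed.

Lemma reach {G} (g : group_str G) S : finite_sym_gen_set g S ->
  forall x y, exists n, gdist_le (cayley_adj g S) x y n.
Proof.
  intros [_ Hgen] x y. destruct (Hgen (gmul g (ginv g x) y)) as [w [Hw Hp]].
  destruct (walk_ok g S x w Hw) as [H1 [H2 H3]].
  exists (length w). exists (walk g x w). split; [exact H1|]. split; [|lia].
  rewrite H2, <- Hp, gmul_assoc, mul_inv_r, gmul_1l. reflexivity.
Qed.

Lemma least_nat (P : nat -> Prop) : (exists n, P n) -> exists n, P n /\ forall m, P m -> (n <= m)%nat.
Proof.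
  intros [n Hn]. revert Hn. induction n as [n IH] using (well_founded_induction Wf_nat.lt_wf). intros Hn.
  destruct (classic (exists m, P m /\ (m < n)%nat)) as [[m [Hm Hlt]]|Hno].
  - exact (IH m Hlt Hm).
  - exists n. split; [exact Hn|]. intros m Hm. destruct (Compare_dec.le_lt_dec n m); [lia|].
    exfalso. apply Hno. exists m. auto.
Qed.

Lemma gdist_mono {V} (adj : V -> V -> Prop) u v n n' : gdist_le adj u v n -> (n <= n')%nat -> gdist_le adj u v n'.
Proof. intros [l [H1 [H2 H3]]] Hn. exists l. repeat split; auto; lia. Qed.

Lemma exists_wd {G} (g : group_str G) S : finite_sym_gen_set g S ->
  forall x y, exists n, word_dist g S x y n.
Proof.
  intros HS x y. destruct (least_nat (fun n => gdist_le (cayley_adj g S) x y n) (reach g S HS x y)) as [n [H1 H2]].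
  exists n. split; auto.
Qed.

Fixpoint Ball {G} (g : group_str G) (S : list G) (y : G) (N : nat) : list G :=
  match N with
  | O => [y]
  | Datatypes.S N' => y :: flat_map (fun s => Ball g S (gmul g y s) N') S
  end.

Fixpoint ballsize (k N : nat) : nat := match N with O => 1 | Datatypes.S N' => 1 + k * ballsize k N' end.

Lemma flat_len {G} (F : G -> list G) (k : nat) (T : list G) : (forall s, length (F s) = k) ->
  length (flat_map F T) = (length T * k)%nat.
Proof. intros H. induction T as [|s T IH]; simpl; [reflexivity|]. rewrite length_app, IH, H. reflexivity. Qed.

Lemma Ball_length {G} (g : group_str G) S y N : length (Ball g S y N) = ballsize (length S) N.
Proof.
  revert y; induction N as [|N IH]; intros y; simpl; [reflexivity|]. f_equal.
  apply flat_len. intros s. apply IH.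
Qed.

Lemma Ball_complete {G} (g : group_str G) S : forall l y N, chain (cayley_adj g S) y l -> (length l <= N)%nat ->
  In (last l y) (Ball g S y N).
Proof.
  induction l as [|z l IH]; intros y N Hc Hl.
  - destruct N; simpl; auto.
  - destruct N as [|N]; [simpl in Hl; lia|]. destruct Hc as [[s [Hs Hz]] Hc].
    rewrite last_cons_eq. simpl. right. apply in_flat_map. exists s. split; [exact Hs|].
    subst z. apply IH; [exact Hc|simpl in Hl; lia].
Qed.

Lemma Ball_sound {G} (g : group_str G) S : forall N y x, In x (Ball g S y N) -> gdist_le (cayley_adj g S) y x N.
Proof.
  induction N as [|N IH]; intros y x Hx; simpl in Hx.
  - destruct Hx as [<-|[]]. exists []. simpl. repeat split; lia.
  - destruct Hx as [<-|Hx]. { exists []. simpl. repeat split; lia. }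
    apply in_flat_map in Hx. destruct Hx as [s [Hs Hx]].
    destruct (IH _ _ Hx) as [l [H1 [H2 H3]]].
    exists (gmul g y s :: l). split; [split; [exists s; auto|exact H1]|].
    split; [rewrite last_cons_eq; exact H2|simpl; lia].
Qed.

Lemma chain_prefix {V} (adj : V -> V -> Prop) : forall l u x, chain adj u l -> In x (u :: l) ->
  exists l1, chain adj u l1 /\ last l1 u = x /\ (length l1 <= length l)%nat.
Proof.
  induction l as [|z l IH]; intros u x Hc Hx.
  - destruct Hx as [<-|[]]. exists []. simpl. repeat split; lia.
  - destruct Hx as [<-|Hx]. { exists []. simpl. repeat split; lia. }
    destruct Hc as [Ha Hc]. destruct (IH z x Hc Hx) as [l1 [H1 [H2 H3]]].
    exists (z :: l1). split; [split; auto|]. split; [rewrite last_cons_eq; exact H2|simpl; lia].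
Qed.

Lemma count_levels {V} (h : V -> nat) (P : V -> Prop) (B : nat) :
  (forall l, NoDup l -> (forall x, In x l -> P x) -> forall n, (forall x, In x l -> h x = n) -> (length l <= B)%nat) ->
  forall N l, NoDup l -> (forall x, In x l -> P x /\ (h x < N)%nat) -> (length l <= N * B)%nat.
Proof.
  intros HB. induction N as [|N IH]; intros l Hl Hx.
  - destruct l as [|x l]; [simpl; lia|]. destruct (Hx x (or_introl eq_refl)) as [_ H]; lia.
  - set (p := fun x => Nat.eqb (h x) N).
    assert (E : length l = (length (filter p l) + length (filter (fun x => negb (p x)) l))%nat).
    { clear. induction l as [|a l IH]; simpl; [reflexivity|]. destruct (p a); simpl; lia. }
    assert (A1 : (length (filter p l) <= B)%nat).
    { apply (HB _ (NoDup_filter p Hl)) with (n := N).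
      - intros x Hin. apply filter_In in Hin. apply Hx. tauto.
      - intros x Hin. apply filter_In in Hin. destruct Hin as [_ Hin]. apply Nat.eqb_eq. exact Hin. }
    assert (A2 : (length (filter (fun x => negb (p x)) l) <= N * B)%nat).
    { apply IH. apply NoDup_filter; exact Hl.
      intros x Hin. apply filter_In in Hin. destruct Hin as [Hin Hn]. destruct (Hx x Hin) as [HP Hh].
      split; [exact HP|]. unfold p in Hn. destruct (Nat.eqb_spec (h x) N); simpl in Hn; [discriminate|lia]. }
    simpl. lia.
Qed.

Lemma NoDup_prod {A B} (l : list A) (l' : list B) : NoDup l -> NoDup l' -> NoDup (list_prod l l').
Proof.
  intros Hl Hl'. induction Hl as [|a l Ha Hl IH]; simpl; [constructor|].
  apply NoDup_app.
  - apply NoDup_map_NoDup_ForallPairs; [|exact Hl']. intros x y _ _ E. injection E; auto.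
  - exact IH.
  - intros [x y] H1 H2. apply in_map_iff in H1. destruct H1 as [z [E _]]. injection E; intros; subst.
    apply in_prod_iff in H2. tauto.
Qed.

Lemma ivt {V} (adj : V -> V -> Prop) (L Rt W : V -> Prop) :
  (forall x, ~ W x -> L x \/ Rt x) -> (forall x y, adj x y -> L x -> ~ Rt y) -> (forall x, L x -> ~ Rt x) ->
  forall l u, chain adj u l -> L u -> Rt (last l u) -> exists x, In x (u :: l) /\ W x.
Proof.
  intros H1 H2 H3. induction l as [|z l IH]; intros u Hc Hu Hl.
  - exfalso. exact (H3 u Hu Hl).
  - destruct Hc as [Ha Hc]. rewrite last_cons_eq in Hl.
    destruct (classic (W z)) as [Hw|Hw]. { exists z. simpl; auto. }
    destruct (H1 z Hw) as [Hz|Hz].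
    + destruct (IH z Hc Hz Hl) as [x [Hx Hx']]. exists x. split; [simpl in *; tauto|exact Hx'].
    + exfalso. exact (H2 u z Ha Hu Hz).
Qed.


Definition Aof (p q : R * R) : R :=
  1 + ((fst p - fst q) ^ 2 + (snd p - snd q) ^ 2) / (2 * snd p * snd q).

Lemma ln_le' x y : 0 < x -> x <= y -> ln x <= ln y.
Proof. intros Hx Hxy. destruct (Rle_lt_or_eq_dec _ _ Hxy) as [H|H].
  - left. apply ln_increasing; auto. - subst; lra. Qed.

Lemma exp_le' x y : x <= y -> exp x <= exp y.
Proof. intros Hxy. destruct (Rle_lt_or_eq_dec _ _ Hxy) as [H|H].
  - left. apply exp_increasing; auto. - subst; lra. Qed.

Lemma div_le_X n d X : 0 < d -> n <= X * d -> n / d <= X.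
Proof. intros Hd H. unfold Rdiv. apply Rmult_le_reg_r with d; auto.
  rewrite Rmult_assoc, Rinv_l; lra. Qed.

Lemma div_ge_X n d X : 0 < d -> X * d <= n -> X <= n / d.
Proof. intros Hd H. unfold Rdiv. apply Rmult_le_reg_r with d; auto.
  rewrite Rmult_assoc, Rinv_l; lra. Qed.

Lemma A_ge1 p q : 0 < snd p -> 0 < snd q -> 1 <= Aof p q.
Proof. intros Hp Hq. unfold Aof. assert (0 <= ((fst p - fst q) ^ 2 + (snd p - snd q) ^ 2) / (2 * snd p * snd q)).
  { apply div_ge_X; [nra|]. rewrite Rmult_0_l. pose proof (pow2_ge_0 (fst p - fst q)); pose proof (pow2_ge_0 (snd p - snd q)); lra. } lra. Qed.

Lemma hyp_A p q D : 0 < snd p -> 0 < snd q -> hyp_dist p q <= D -> Aof p q <= exp D.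
Proof.
  intros Hp Hq H. pose proof (A_ge1 p q Hp Hq) as HA.
  change (hyp_dist p q) with (ln (Aof p q + sqrt (Aof p q ^ 2 - 1))) in H.
  pose proof (sqrt_pos (Aof p q ^ 2 - 1)).
  assert (ln (Aof p q) <= D). { eapply Rle_trans; [|exact H]. apply ln_le'; lra. }
  rewrite <- (exp_ln (Aof p q)) by lra. apply exp_le'. exact H1.
Qed.

Lemma A_hyp p q M : 0 < snd p -> 0 < snd q -> Aof p q <= M -> hyp_dist p q <= ln (2 * M).
Proof.
  intros Hp Hq H. pose proof (A_ge1 p q Hp Hq) as HA.
  change (hyp_dist p q) with (ln (Aof p q + sqrt (Aof p q ^ 2 - 1))).
  pose proof (sqrt_pos (Aof p q ^ 2 - 1)).
  assert (sqrt (Aof p q ^ 2 - 1) <= Aof p q).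
  { rewrite <- (sqrt_pow2 (Aof p q)) at 2 by lra. apply sqrt_le_1_alt. lra. }
  apply ln_le'; lra.
Qed.

Lemma A_parts p q E : 0 < snd p -> 0 < snd q -> Aof p q <= E ->
  (fst p - fst q) ^ 2 <= 2 * E * snd p * snd q /\ (snd p - snd q) ^ 2 <= 2 * E * snd p * snd q.
Proof.
  intros Hp Hq H. unfold Aof in H.
  set (N := (fst p - fst q) ^ 2 + (snd p - snd q) ^ 2) in H.
  set (d := 2 * snd p * snd q) in H.
  assert (Hd : 0 < d) by (unfold d; nra).
  assert (HN : N = N / d * d) by (field; lra).
  assert (N <= (E - 1) * d) by (rewrite HN; apply Rmult_le_compat_r; lra).
  pose proof (pow2_ge_0 (fst p - fst q)). pose proof (pow2_ge_0 (snd p - snd q)).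
  assert (E >= 1) by (pose proof (pow2_ge_0 (fst p - fst q)); assert (0 <= N / d) by (apply div_ge_X; [lra|]; unfold N; lra); lra).
  unfold N, d in *. split; nra.
Qed.

Lemma ratio_bound b b' E : 0 < b -> 0 < b' -> 0 <= E -> (b - b') ^ 2 <= 2 * E * b * b' -> b' <= (2 * E + 2) * b.
Proof.
  intros Hb Hb' HE H. destruct (Rle_dec b' ((2 * E + 2) * b)) as [|Hn]; [assumption|exfalso].
  apply Rnot_le_lt in Hn. set (K := 2 * E + 2) in *.
  assert (H1 : b' - b >= b' * (K - 1) / K).
  { apply Rle_ge. apply div_le_X; [unfold K; lra|]. unfold K in *. nra. }
  assert (H2 : b' * (K - 1) / K > 0). { apply Rlt_gt. unfold Rdiv. apply Rmult_lt_0_compat; [unfold K in *; nra|]. apply Rinv_0_lt_compat; unfold K; lra. }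
  assert (H3 : (b' * (K - 1) / K) ^ 2 <= 2 * E * b * b') by nra.
  assert (H4 : (b' * (K - 1) / K) ^ 2 * K ^ 2 = (b' * (K - 1)) ^ 2) by (field; unfold K; lra).
  assert (H5 : (b' * (K - 1)) ^ 2 <= 2 * E * b * b' * K ^ 2).
  { rewrite <- H4. apply Rmult_le_compat_r; [nra|exact H3]. }
  assert (H6 : b' * (K - 1) ^ 2 <= 2 * E * b * K ^ 2) by nra.
  assert (H7 : 2 * E * b * K ^ 2 <= 2 * E * K * b') by (unfold K in *; nra).
  assert (H8 : (K - 1) ^ 2 <= 2 * E * K) by nra.
  unfold K in H8. nra.
Qed.


Definition Kf D := 2 * exp D + 2.
Definition Mf D := 2 * exp D * Kf D + 1.

Lemma abs_from_sq x y : 0 <= y -> x ^ 2 <= y ^ 2 -> Rabs x <= y.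
Proof. intros Hy H. unfold Rabs. destruct (Rcase_abs x); nra. Qed.

Lemma Rabs_le_inv a b : Rabs a <= b -> - b <= a <= b.
Proof. unfold Rabs. destruct (Rcase_abs a); lra. Qed.

Lemma near z p D : 0 < snd z -> 0 < snd p -> hyp_dist z p <= D ->
  snd p <= Kf D * snd z /\ snd z <= Kf D * snd p /\ Rabs (fst z - fst p) <= Mf D * snd p.
Proof.
  intros Hz Hp H. pose proof (hyp_A _ _ _ Hz Hp H) as HA.
  destruct (A_parts _ _ _ Hz Hp HA) as [H1 H2].
  pose proof (exp_pos D) as HE.
  assert (R1 : snd p <= Kf D * snd z). { unfold Kf. apply ratio_bound with (E := exp D); lra. }
  assert (R2 : snd z <= Kf D * snd p). { unfold Kf. apply ratio_bound with (E := exp D); lra. }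
  split; [exact R1|]. split; [exact R2|].
  apply abs_from_sq. { unfold Mf, Kf. nra. }
  assert (HK : 0 < Kf D) by (unfold Kf; lra).
  assert (2 * exp D * snd z * snd p <= 2 * exp D * Kf D * snd p ^ 2).
  { assert (2 * exp D * snd p > 0) by nra. nra. }
  assert (2 * exp D * Kf D <= Mf D ^ 2). { unfold Mf. assert (0 <= 2 * exp D * Kf D) by nra. nra. }
  assert (2 * exp D * Kf D * snd p ^ 2 <= Mf D ^ 2 * snd p ^ 2). { apply Rmult_le_compat_r; [nra|lra]. }
  replace ((Mf D * snd p) ^ 2) with (Mf D ^ 2 * snd p ^ 2) by ring. lra.
Qed.

Lemma step_sep p q w : 0 < w -> 0 < snd p -> 0 < snd q ->
  fst p < - w * snd p -> fst q > w * snd q -> 1 + 2 * w ^ 2 <= Aof p q.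
Proof.
  intros Hw Hp Hq H1 H2. unfold Aof. apply Rplus_le_compat_l. apply div_ge_X; [nra|].
  assert (fst q - fst p > w * (snd p + snd q)) by nra.
  assert (0 < w * (snd p + snd q)) by nra.
  assert ((fst q - fst p) ^ 2 >= (w * (snd p + snd q)) ^ 2).
  { simpl. rewrite !Rmult_1_r. apply Rle_ge. apply Rmult_le_compat; lra. }
  assert ((w * (snd p + snd q)) ^ 2 >= 4 * w ^ 2 * snd p * snd q).
  { assert (w ^ 2 * (snd p - snd q) ^ 2 >= 0) by (apply Rle_ge; apply Rmult_le_pos; apply pow2_ge_0). nra. }
  pose proof (pow2_ge_0 (snd p - snd q)).
  replace ((fst p - fst q) ^ 2) with ((fst q - fst p) ^ 2) by ring. nra.
Qed.

Lemma grid_left z b t D w : 0 < snd z -> 0 < b -> 0 < w -> Mf D + Kf D * w + 1 <= t ->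
  hyp_dist z (-1 * (b * t), b) <= D -> fst z < - w * snd z.
Proof.
  intros Hz Hb Hw Ht H. destruct (near z (-1 * (b * t), b) D Hz Hb H) as [_ [H2 H3]]. simpl in *.
  apply Rabs_le_inv in H3. destruct H3 as [_ H3].
  assert (HK : 0 < Kf D) by (unfold Kf; pose proof (exp_pos D); lra).
  assert (w * snd z <= w * (Kf D * b)) by (apply Rmult_le_compat_l; lra).
  assert (b * t >= b * (Mf D + Kf D * w + 1)) by nra. nra.
Qed.

Lemma grid_right z b t D w : 0 < snd z -> 0 < b -> 0 < w -> Mf D + Kf D * w + 1 <= t ->
  hyp_dist z (1 * (b * t), b) <= D -> fst z > w * snd z.
Proof.
  intros Hz Hb Hw Ht H. destruct (near z (1 * (b * t), b) D Hz Hb H) as [_ [H2 H3]]. simpl in *.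
  apply Rabs_le_inv in H3. destruct H3 as [H3 _].
  assert (HK : 0 < Kf D) by (unfold Kf; pose proof (exp_pos D); lra).
  assert (w * snd z <= w * (Kf D * b)) by (apply Rmult_le_compat_l; lra).
  assert (b * t >= b * (Mf D + Kf D * w + 1)) by nra. nra.
Qed.

Lemma pow_sep Q K j j' : 1 <= Q -> K ^ 2 < Q -> Q ^ j <= K ^ 2 * Q ^ j' -> (j <= j')%nat.
Proof.
  intros HQ HK H. destruct (Compare_dec.le_lt_dec j j') as [|Hlt]; [assumption|exfalso].
  assert (H0 : Q ^ (S j') <= Q ^ j) by (apply Rle_pow; [lra|lia]).
  change (Q ^ S j') with (Q * Q ^ j') in H0. assert (H1 : 0 < Q ^ j') by (apply pow_lt; lra).
  assert (H2 : K ^ 2 * Q ^ j' < Q * Q ^ j') by (apply Rmult_lt_compat_r; lra). lra.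
Qed.

Lemma nat_sep (i i' : nat) : Rabs (INR i - INR i') < 1 -> i = i'.
Proof.
  intros H. destruct (Nat.lt_trichotomy i i') as [Hl|[He|Hl]]; [exfalso| exact He| exfalso].
  - apply le_INR in Hl. rewrite S_INR in Hl. apply Rabs_def2 in H. lra.
  - apply le_INR in Hl. rewrite S_INR in Hl. apply Rabs_def2 in H. lra.
Qed.

Lemma mu_bound z z' b t tmax D : 0 < snd z -> 0 < snd z' -> 0 < b -> 0 <= t <= tmax ->
  hyp_dist z (-1 * (b * t), b) <= D -> hyp_dist z' (1 * (b * t), b) <= D ->
  Aof z z' <= 1 + ((2 * Mf D + 2 * tmax) ^ 2 + Kf D ^ 2) * Kf D ^ 2.
Proof.
  intros Hz Hz' Hb Ht H H'.
  destruct (near z (-1 * (b * t), b) D Hz Hb H) as [A1 [A2 A3]].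
  destruct (near z' (1 * (b * t), b) D Hz' Hb H') as [B1 [B2 B3]].
  simpl in *. set (K := Kf D) in *. set (M := Mf D) in *.
  assert (HK : 2 <= K) by (unfold K, Kf; pose proof (exp_pos D); lra).
  assert (HM : 1 <= M) by (unfold M, Mf; fold K; pose proof (exp_pos D); nra).
  apply Rabs_le_inv in A3. apply Rabs_le_inv in B3.
  set (L := 2 * M + 2 * tmax).
  assert (Ha : Rabs (fst z - fst z') <= L * b). { apply Rabs_le. unfold L. nra. }
  assert (Ha2 : (fst z - fst z') ^ 2 <= (L * b) ^ 2) by (apply pow_maj_Rabs; exact Ha).
  assert (Hb2 : Rabs (snd z - snd z') <= K * b) by (apply Rabs_le; nra).
  assert (Hb3 : (snd z - snd z') ^ 2 <= (K * b) ^ 2) by (apply pow_maj_Rabs; exact Hb2).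
  assert (Hbb : b * b <= (K * snd z) * (K * snd z')) by (apply Rmult_le_compat; lra).
  unfold Aof. apply Rplus_le_compat_l. apply div_le_X; [nra|].
  assert (HX : 0 <= L ^ 2 + K ^ 2) by nra.
  assert (N1 : (fst z - fst z') ^ 2 + (snd z - snd z') ^ 2 <= (L ^ 2 + K ^ 2) * (b * b)) by nra.
  assert (N2 : (L ^ 2 + K ^ 2) * (b * b) <= (L ^ 2 + K ^ 2) * ((K * snd z) * (K * snd z'))) by (apply Rmult_le_compat_l; lra).
  assert (N3 : 0 <= (L ^ 2 + K ^ 2) * K ^ 2 * (snd z * snd z')) by (apply Rmult_le_pos; nra).
  nra.
Qed.

Lemma fiber_bound z z' w : 0 < snd z -> 0 < snd z' -> 0 < w ->
  Rabs (fst z) <= w * snd z -> Rabs (fst z') <= w * snd z' ->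
  ln (snd z) < ln (snd z') + 1 -> ln (snd z') < ln (snd z) + 1 ->
  Aof z z' <= 1 + (w ^ 2 * (1 + exp 1) ^ 2 * exp 1 + exp 1 ^ 3).
Proof.
  intros Hz Hz' Hw H1 H2 L1 L2.
  set (e := exp 1). assert (He : 1 <= e) by (unfold e; pose proof (exp_ineq1_le 1); lra).
  set (b := snd z) in *. set (b' := snd z') in *.
  assert (R1 : b < e * b'). { rewrite <- (exp_ln b), <- (exp_ln b') by assumption. unfold e. rewrite <- exp_plus. apply exp_increasing. lra. }
  assert (R2 : b' < e * b). { rewrite <- (exp_ln b), <- (exp_ln b') by assumption. unfold e. rewrite <- exp_plus. apply exp_increasing. lra. }
  apply Rabs_le_inv in H1. apply Rabs_le_inv in H2.
  assert (Ha : Rabs (fst z - fst z') <= w * (1 + e) * b) by (apply Rabs_le; nra).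
  assert (Ha2 : (fst z - fst z') ^ 2 <= (w * (1 + e) * b) ^ 2) by (apply pow_maj_Rabs; exact Ha).
  assert (Hb2 : Rabs (b - b') <= e * b) by (apply Rabs_le; nra).
  assert (Hb3 : (b - b') ^ 2 <= (e * b) ^ 2) by (apply pow_maj_Rabs; exact Hb2).
  assert (Hbb : b * b <= b * (e * b')) by (apply Rmult_le_compat_l; lra).
  unfold Aof. fold b b'. apply Rplus_le_compat_l. apply div_le_X; [nra|].
  set (X := w ^ 2 * (1 + e) ^ 2 * e + e ^ 3).
  assert (N1 : (fst z - fst z') ^ 2 + (b - b') ^ 2 <= (w ^ 2 * (1 + e) ^ 2 + e ^ 2) * (b * b)) by nra.
  assert (HX : 0 <= w ^ 2 * (1 + e) ^ 2 + e ^ 2) by nra.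
  assert (N2 : (w ^ 2 * (1 + e) ^ 2 + e ^ 2) * (b * b) <= (w ^ 2 * (1 + e) ^ 2 + e ^ 2) * (b * (e * b'))) by (apply Rmult_le_compat_l; lra).
  assert (N3 : 0 <= X * (b * b')) by (apply Rmult_le_pos; unfold X; nra).
  unfold X in *. nra.
Qed.

Lemma grid_sep z D Q T s j j' i i' : 0 < snd z -> 1 <= Q -> Kf D ^ 2 < Q -> Rabs s = 1 ->
  hyp_dist z (s * (Q ^ j * (T + 3 * Mf D * INR i)), Q ^ j) <= D ->
  hyp_dist z (s * (Q ^ j' * (T + 3 * Mf D * INR i')), Q ^ j') <= D -> j = j' /\ i = i'.
Proof.
  intros Hz HQ HKQ Hs H H'.
  assert (Hp : 0 < Q ^ j) by (apply pow_lt; lra). assert (Hp' : 0 < Q ^ j') by (apply pow_lt; lra).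
  destruct (near z (s * (Q ^ j * (T + 3 * Mf D * INR i)), Q ^ j) D Hz Hp H) as [A1 [A2 A3]].
  destruct (near z (s * (Q ^ j' * (T + 3 * Mf D * INR i')), Q ^ j') D Hz Hp' H') as [B1 [B2 B3]].
  simpl in *. set (K := Kf D) in *. set (M := Mf D) in *.
  assert (HK : 2 <= K) by (unfold K, Kf; pose proof (exp_pos D); lra).
  assert (HM : 1 <= M) by (unfold M, Mf; fold K; pose proof (exp_pos D); nra).
  assert (E1 : (j <= j')%nat). { apply (pow_sep Q K); [lra|lra|]. nra. }
  assert (E2 : (j' <= j)%nat). { apply (pow_sep Q K); [lra|lra|]. nra. }
  assert (Ej : j = j') by lia. subst j'. split; [reflexivity|].
  apply nat_sep.
  assert (Hd : Rabs (s * (Q ^ j * (T + 3 * M * INR i))  - s * (Q ^ j * (T + 3 * M * INR i'))) <= 2 * M * Q ^ j).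
  { replace (s * (Q ^ j * (T + 3 * M * INR i))  - s * (Q ^ j * (T + 3 * M * INR i'))) with
      (- (fst z - s * (Q ^ j * (T + 3 * M * INR i))) + (fst z - s * (Q ^ j * (T + 3 * M * INR i')))) by ring.
    eapply Rle_trans; [apply Rabs_triang|]. rewrite Rabs_Ropp. lra. }
  replace (s * (Q ^ j * (T + 3 * M * INR i))  - s * (Q ^ j * (T + 3 * M * INR i'))) with
     (s * (3 * M * Q ^ j) * (INR i - INR i')) in Hd by ring.
  rewrite !Rabs_mult, Hs, (Rabs_right 3), (Rabs_right M), (Rabs_right (Q ^ j)) in Hd by lra.
  assert (Rabs (INR i - INR i') * (3 * M * Q ^ j) <= (2/3) * (3 * M * Q ^ j)) by lra.
  apply Rmult_le_reg_r in H0; [lra|nra].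
Qed.


Lemma QI_up {G} (g : group_str G) S (f : G -> R * R) lam C :
  finite_sym_gen_set g S -> 0 <= lam ->
  (forall x y n, word_dist g S x y n -> hyp_dist (f x) (f y) <= lam * INR n + C) ->
  forall x y n, gdist_le (cayley_adj g S) x y n -> hyp_dist (f x) (f y) <= lam * INR n + C.
Proof.
  intros HS Hl Hq x y n Hd. destruct (exists_wd g S HS x y) as [n0 Hn0].
  pose proof (Hq _ _ _ Hn0). destruct Hn0 as [_ Hmin]. specialize (Hmin n Hd).
  apply le_INR in Hmin. nra.
Qed.

Lemma QI_low {G} (g : group_str G) S (f : G -> R * R) lam C :
  finite_sym_gen_set g S -> 1 <= lam ->
  (forall x y n, word_dist g S x y n -> / lam * INR n - C <= hyp_dist (f x) (f y)) ->
  forall x y D N, hyp_dist (f x) (f y) <= D -> lam * (D + C) <= INR N -> gdist_le (cayley_adj g S) x y N.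
Proof.
  intros HS Hl Hq x y D N Hd HN. destruct (exists_wd g S HS x y) as [n0 Hn0].
  pose proof (Hq _ _ _ Hn0) as H. destruct Hn0 as [Hg _].
  apply gdist_mono with n0; [exact Hg|]. apply INR_le.
  assert (/ lam * INR n0 <= D + C) by lra.
  assert (INR n0 <= lam * (D + C)).
  { replace (INR n0) with (lam * (/ lam * INR n0)) by (field; lra). apply Rmult_le_compat_l; lra. }
  lra.
Qed.

Definition nfloor (t : R) : nat := Z.to_nat (Int_part t).

Lemma nfloor_spec t : 0 <= t -> INR (nfloor t) <= t < INR (nfloor t) + 1.
Proof.
  intros Ht. destruct (base_Int_part t) as [H1 H2].
  assert (Hz : (0 <= Int_part t)%Z).
  { apply le_IZR. assert (IZR (Int_part t) > -1) by lra.
    destruct (Z_le_gt_dec 0 (Int_part t)) as [|Hg]; [apply IZR_le; lia|].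
    assert (Int_part t <= -1)%Z by lia. apply IZR_le in H0. lra. }
  unfold nfloor. rewrite INR_IZR_INZ, Z2Nat.id by exact Hz. lra.
Qed.

Lemma nat_above (x : R) : exists n : nat, x <= INR n.
Proof.
  destruct (archimed x) as [H1 _]. exists (Z.to_nat (up x)).
  destruct (Z_le_gt_dec 0 (up x)).
  - rewrite INR_IZR_INZ, Z2Nat.id by lia. lra.
  - assert (up x <= 0)%Z by lia. apply IZR_le in H. pose proof (pos_INR (Z.to_nat (up x))). lra.
Qed.


Theorem mainTheorem16 (G : Type) (g : group_str G) :
  (exists (S : list G) (f : G -> R * R), finite_sym_gen_set g S /\ qi_to_H g S f) ->
  group_extraterrestrial g.
Proof.
  intros [S [f [HS [HfH [lam [C [Hlam [HC [Hqi Hdens]]]]]]]]].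
  exists S. split; [exact HS|].
  assert (Hup := QI_up g S f lam C HS ltac:(lra) (fun x y n H => proj2 (Hqi x y n H))).
  assert (Hlow := QI_low g S f lam C HS Hlam (fun x y n H => proj1 (Hqi x y n H))).
  assert (Hpos : forall x, 0 < snd (f x)) by exact HfH.
  assert (Hd' : forall z, exists x, in_H z -> hyp_dist (f x) z <= C).
  { intros z. destruct (classic (in_H z)) as [Hz|Hz].
    - destruct (Hdens z Hz) as [x Hx]. exists x; auto.
    - exists (gone g). intros; contradiction. }
  pose (cf := fun z => proj1_sig (constructive_indefinite_description _ (Hd' z))).
  assert (Hcf : forall z, in_H z -> hyp_dist (f (cf z)) z <= C).
  { intros z Hz. exact (proj2_sig (constructive_indefinite_description _ (Hd' z)) Hz). }
  clearbody cf.
  pose (K := Kf C). pose (M := Mf C).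
  pose (w := exp (lam + C) + 1).
  pose (Q := K ^ 2 + 1).
  pose (T0 := M + K * w + 1).
  pose (tt := fun i : nat => T0 + 3 * M * INR i).
  pose (P := fun ji : nat * nat => (-1 * (Q ^ fst ji * tt (snd ji)), Q ^ fst ji)).
  pose (P' := fun ji : nat * nat => (1 * (Q ^ fst ji * tt (snd ji)), Q ^ fst ji)).
  pose (X := fun ji => cf (P ji)). pose (Y := fun ji => cf (P' ji)).
  assert (HE : 1 <= exp C) by (pose proof (exp_ineq1_le C); lra).
  assert (HK : 4 <= K) by (unfold K, Kf; lra).
  assert (HM : 1 <= M) by (unfold M, Mf; fold K; nra).
  assert (Hw : 1 <= w) by (unfold w; pose proof (exp_pos (lam + C)); lra).
  assert (HQ : 1 <= Q) by (unfold Q; nra).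
  assert (HKQ : K ^ 2 < Q) by (unfold Q; lra).
  assert (HQj : forall j, 0 < Q ^ j) by (intros; apply pow_lt; lra).
  assert (Htt : forall i, T0 <= tt i) by (intros; unfold tt; pose proof (pos_INR i); nra).
  assert (HXn : forall ji, hyp_dist (f (X ji)) (P ji) <= C) by (intros; apply Hcf; unfold in_H, P; simpl; auto).
  assert (HYn : forall ji, hyp_dist (f (Y ji)) (P' ji) <= C) by (intros; apply Hcf; unfold in_H, P'; simpl; auto).
  assert (HXl : forall ji, fst (f (X ji)) < - w * snd (f (X ji))).
  { intros [j i]. apply (grid_left _ (Q ^ j) (tt i) C w). apply Hpos. apply HQj. lra. apply Htt. apply (HXn (j, i)). }
  assert (HYr : forall ji, fst (f (Y ji)) > w * snd (f (Y ji))).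
  { intros [j i]. apply (grid_right _ (Q ^ j) (tt i) C w). apply Hpos. apply HQj. lra. apply Htt. apply (HYn (j, i)). }
  assert (HXinj : forall a b, X a = X b -> a = b).
  { intros [j i] [j' i'] E.
    assert (Hab : Rabs (-1) = 1) by (unfold Rabs; destruct (Rcase_abs (-1)); lra).
    assert (H2 : hyp_dist (f (X (j, i))) (P (j', i')) <= C) by (rewrite E; apply (HXn (j', i'))).
    destruct (grid_sep (f (X (j, i))) C Q T0 (-1) j j' i i' (Hpos _) HQ HKQ Hab (HXn (j, i)) H2) as [E1 E2].
    subst; reflexivity. }
  assert (HYinj : forall a b, Y a = Y b -> a = b).
  { intros [j i] [j' i'] E.
    assert (Hab : Rabs 1 = 1) by (unfold Rabs; destruct (Rcase_abs 1); lra).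
    assert (H2 : hyp_dist (f (Y (j, i))) (P' (j', i')) <= C) by (rewrite E; apply (HYn (j', i'))).
    destruct (grid_sep (f (Y (j, i))) C Q T0 1 j j' i i' (Hpos _) HQ HKQ Hab (HYn (j, i)) H2) as [E1 E2].
    subst; reflexivity. }
  assert (Hstep : forall x y, cayley_adj g S x y -> fst (f x) < - w * snd (f x) -> ~ fst (f y) > w * snd (f y)).
  { intros x y Ha Hx Hy.
    assert (Hg : gdist_le (cayley_adj g S) x y 1) by (exists [y]; simpl; repeat split; auto).
    pose proof (Hup _ _ _ Hg) as H1. pose proof (hyp_A _ _ _ (Hpos x) (Hpos y) H1) as H2.
    pose proof (step_sep _ _ w ltac:(lra) (Hpos x) (Hpos y) Hx Hy) as H3.
    simpl in H2. rewrite Rmult_1_r in H2. unfold w in H3. pose proof (exp_pos (lam + C)). nra. }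
  intros m.
  pose (e := exp 1). pose (A0 := 1 + (w ^ 2 * (1 + e) ^ 2 * e + e ^ 3)).
  destruct (nat_above (lam * (ln (2 * A0) + C))) as [N0 HN0].
  pose (B := ballsize (length S) N0).
  destruct (nat_above (ln Q)) as [q Hq].
  pose (I := (m * B * q + 1)%nat).
  pose (tmax := T0 + 3 * M * INR I).
  pose (Amax := 1 + ((2 * M + 2 * tmax) ^ 2 + K ^ 2) * K ^ 2).
  destruct (nat_above (lam * (ln (2 * Amax) + C))) as [k Hk].
  exists k. intros r.
  pose (Kr := Kf (lam * INR r + C)).
  pose (c0 := ln (K * Kr)).
  destruct (nat_above (2 * c0 + 1)) as [c Hc].
  pose (J := (m * B * c + 1)%nat).
  pose (idx := list_prod (seq 0 J) (seq 0 I)).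
  pose (U := map X idx). pose (O := map Y idx).
  pose (wb := fun x => if Rle_dec (Rabs (fst (f x))) (w * snd (f x)) then true else false).
  pose (eqd := fun x y : G => excluded_middle_informative (x = y)).
  pose (F := nodup eqd (filter wb (flat_map (fun u => Ball g S u r) U))).
  pose (mu := fun x => match find (fun p => if eqd (X p) x then true else false) idx with Some p => Y p | None => x end).
  exists U, F, O, mu.
  assert (Hidx : forall p, In p idx -> (fst p < J)%nat /\ (snd p < I)%nat).
  { intros [j i] Hp. apply in_prod_iff in Hp. destruct Hp as [H1 H2]. apply in_seq in H1, H2. simpl. lia. }
  assert (HU : forall u, In u U <-> exists p, In p idx /\ u = X p).
  { intros u. unfold U. rewrite in_map_iff. split; intros [p [H1 H2]]; exists p; auto. }
  assert (HO : forall u, In u O <-> exists p, In p idx /\ u = Y p).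
  { intros u. unfold O. rewrite in_map_iff. split; intros [p [H1 H2]]; exists p; auto. }
  assert (HF : forall x, In x F <-> (exists u, In u U /\ In x (Ball g S u r)) /\ Rabs (fst (f x)) <= w * snd (f x)).
  { intros x. unfold F. rewrite nodup_In, filter_In, in_flat_map. unfold wb.
    destruct (Rle_dec (Rabs (fst (f x))) (w * snd (f x))); split; intros [H1 H2]; auto; try discriminate; contradiction. }
  assert (HmuX : forall p, In p idx -> mu (X p) = Y p).
  { intros p Hp. unfold mu. destruct (find (fun p0 => if eqd (X p0) (X p) then true else false) idx) eqn:Ef.
    - apply find_some in Ef. destruct Ef as [_ Ef]. destruct (eqd (X p0) (X p)) as [E|]; [|discriminate].
      rewrite (HXinj _ _ E). reflexivity.
    - exfalso. pose proof (find_none _ _ Ef p Hp) as H. simpl in H. destruct (eqd (X p) (X p)); [discriminate|tauto]. }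
  assert (Hidx_nd : NoDup idx) by (apply NoDup_prod; apply seq_NoDup).
  assert (HUnd : NoDup U).
  { apply NoDup_map_NoDup_ForallPairs; [|exact Hidx_nd]. intros a b _ _ E. apply HXinj; exact E. }
  assert (HOnd : NoDup O).
  { apply NoDup_map_NoDup_ForallPairs; [|exact Hidx_nd]. intros a b _ _ E. apply HYinj; exact E. }
  assert (HKr : 0 < Kr) by (unfold Kr, Kf; pose proof (exp_pos (lam * INR r + C)); lra).
  assert (HlnQ : 0 <= ln Q) by (rewrite <- ln_1; apply ln_le'; lra).
  assert (HLev : forall x, In x F -> 0 <= ln (snd (f x)) + c0 < INR (J * q + c)).
  { intros x Hx. apply HF in Hx. destruct Hx as [[u [Hu HB]] HW]. apply HU in Hu. destruct Hu as [[j i] [Hp ->]].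
    apply Ball_sound in HB. pose proof (Hup _ _ _ HB) as H1.
    destruct (near _ _ _ (Hpos _) (Hpos _) H1) as [A1 [A2 _]]. fold Kr in A1, A2.
    destruct (near _ (P (j, i)) _ (Hpos _) (HQj j) (HXn (j, i))) as [B1 [B2 _]]. fold K in B1, B2. simpl in B1, B2.
    set (bx := snd (f x)) in *. set (bu := snd (f (X (j, i)))) in *.
    assert (Hbx : 0 < bx) by apply Hpos. assert (Hbu : 0 < bu) by apply Hpos.
    assert (C1 : Q ^ j <= K * Kr * bx) by nra.
    assert (C2 : bx <= K * Kr * Q ^ j) by nra.
    assert (L1 : ln (Q ^ j) <= c0 + ln bx).
    { unfold c0. rewrite <- ln_mult by nra. apply ln_le'; [apply HQj|lra]. }
    assert (L2 : ln bx <= c0 + ln (Q ^ j)).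
    { unfold c0. rewrite <- ln_mult by (try apply HQj; nra). apply ln_le'; [lra|lra]. }
    rewrite ln_pow in L1, L2 by lra.
    destruct (Hidx _ Hp) as [Hj _]. simpl in Hj.
    assert (Ij : INR j <= INR J) by (apply le_INR; lia).
    assert (Iq : INR j * ln Q <= INR J * INR q) by (apply Rmult_le_compat; auto using pos_INR).
    assert (0 <= INR j * ln Q) by (apply Rmult_le_pos; auto using pos_INR).
    rewrite plus_INR, mult_INR. lra. }
  pose (h := fun x => nfloor (ln (snd (f x)) + c0)).
  assert (Hcount : (length F <= (J * q + c) * B)%nat).
  { apply (count_levels h (fun x => In x F) B).
    - intros l Hnd Hin n Hh. destruct l as [|y l']; [simpl; lia|].
      assert (Hincl : incl (y :: l') (Ball g S y N0)).
      { intros x Hx. pose proof (Hin x Hx) as Fx. pose proof (Hin y (or_introl eq_refl)) as Fy.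
        pose proof (Hh x Hx) as Ex. pose proof (Hh y (or_introl eq_refl)) as Ey.
        destruct (nfloor_spec _ (proj1 (HLev x Fx))) as [X1 X2].
        destruct (nfloor_spec _ (proj1 (HLev y Fy))) as [Y1 Y2].
        unfold h in Ex, Ey. rewrite Ex in X1, X2. rewrite Ey in Y1, Y2.
        apply HF in Fx. apply HF in Fy.
        pose proof (fiber_bound (f y) (f x) w (Hpos _) (Hpos _) ltac:(lra) (proj2 Fy) (proj2 Fx) ltac:(lra) ltac:(lra)) as HA.
        pose proof (A_hyp _ _ _ (Hpos _) (Hpos _) HA) as Hh2.
        destruct (Hlow y x _ N0 Hh2 HN0) as [l0 [Hc0 [Hl0 Hlen0]]].
        rewrite <- Hl0. apply Ball_complete; assumption. }
      pose proof (NoDup_incl_length Hnd Hincl) as HL. rewrite Ball_length in HL. exact HL.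
    - apply NoDup_nodup.
    - intros x Hx. split; [exact Hx|]. apply INR_lt.
      destruct (nfloor_spec _ (proj1 (HLev x Hx))) as [X1 X2]. unfold h. pose proof (HLev x Hx). lra. }
  assert (HlenU : length U = (J * I)%nat) by (unfold U, idx; rewrite length_map, length_prod, !length_seq; reflexivity).
  assert (HUl : forall u, In u U -> fst (f u) < - w * snd (f u)).
  { intros u Hu. apply HU in Hu. destruct Hu as [p [_ ->]]. apply HXl. }
  assert (HOr : forall u, In u O -> fst (f u) > w * snd (f u)).
  { intros u Hu. apply HO in Hu. destruct Hu as [p [_ ->]]. apply HYr. }
  assert (HFw : forall u, In u F -> Rabs (fst (f u)) <= w * snd (f u)).
  { intros u Hu. apply HF in Hu. tauto. }
  assert (Hposw : forall x, 0 < w * snd (f x)) by (intros x; pose proof (Hpos x); nra).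
  split; [exact HUnd|]. split; [apply NoDup_nodup|]. split; [exact HOnd|].
  split. { intros x H1 H2. pose proof (HUl x H1). pose proof (HFw x H2). apply Rabs_le_inv in H0. lra. }
  split. { intros x H1 H2. pose proof (HUl x H1). pose proof (HOr x H2). pose proof (Hposw x). lra. }
  split. { intros x H1 H2. pose proof (HFw x H1). pose proof (HOr x H2). apply Rabs_le_inv in H. lra. }
  split. { intros E. assert (length U = 0%nat) by (rewrite E; reflexivity). rewrite HlenU in H. unfold J, I in H. lia. }
  split. { assert (EJ : (J * I = m * ((J * q + c) * B) + 1)%nat) by (unfold I, J; ring).
    rewrite HlenU. pose proof (Nat.mul_le_mono_l _ _ m Hcount). lia. }
  split. { intros u Hu. apply HU in Hu. destruct Hu as [p [Hp ->]]. rewrite (HmuX p Hp). apply HO. exists p; auto. }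
  split. { intros u1 u2 H1 H2 E. apply HU in H1. apply HU in H2. destruct H1 as [p1 [Hp1 ->]]. destruct H2 as [p2 [Hp2 ->]].
    rewrite (HmuX _ Hp1), (HmuX _ Hp2) in E. rewrite (HYinj _ _ E). reflexivity. }
  split. { intros o Ho. apply HO in Ho. destruct Ho as [p [Hp ->]]. exists (X p). split; [apply HU; exists p; auto|apply HmuX; exact Hp]. }
  split. { intros u Hu. apply HU in Hu. destruct Hu as [[j i] [Hp ->]]. rewrite (HmuX _ Hp).
    destruct (Hidx _ Hp) as [_ Hi]. simpl in Hi.
    assert (Ht : 0 <= tt i <= tmax).
    { split; [pose proof (Htt i); unfold T0 in *; nra|]. unfold tt, tmax. assert (INR i <= INR I) by (apply le_INR; lia). nra. }
    pose proof (mu_bound (f (X (j, i))) (f (Y (j, i))) (Q ^ j) (tt i) tmax C (Hpos _) (Hpos _) (HQj j) Ht (HXn (j, i)) (HYn (j, i))) as HA.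
    pose proof (A_hyp _ _ _ (Hpos _) (Hpos _) HA) as H2.
    exact (Hlow _ _ _ k H2 Hk). }
  intros u l Hu Hch Hl. destruct (Compare_dec.le_lt_dec r (length l)) as [Hr|Hr]; [right; lia|left].
  destruct (ivt (cayley_adj g S) (fun x => fst (f x) < - w * snd (f x)) (fun x => fst (f x) > w * snd (f x))
     (fun x => Rabs (fst (f x)) <= w * snd (f x))) with (l := l) (u := u) as [x [Hx HWx]].
  - intros x Hn. unfold Rabs in Hn. destruct (Rcase_abs (fst (f x))); [left|right]; lra.
  - exact Hstep.
  - intros x H1 H2. pose proof (Hposw x). lra.
  - exact Hch.
  - apply HUl; exact Hu.
  - apply HOr; exact Hl.
  - exists x. split; [exact Hx|]. apply HF. split; [|exact HWx]. exists u. split; [exact Hu|].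
    destruct (chain_prefix _ l u x Hch Hx) as [l1 [Hc1 [Hl1 Hlen1]]]. rewrite <- Hl1.
    apply Ball_complete; [exact Hc1|lia].
Qed.
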